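(* Let $\mathbb{H}$ be a reproducing kernel Hilbert space with inner product $\langle\cdot,\cdot\rangle$ and feature map $\phi$, and let $(X,A,Y)$ be jointly distributed with $Y=\langle\phi(X),y\rangle$ and $A=\langle\phi(X),a\rangle$ for some nonzero $y,a\in\mathbb{H}$, with $\operatorname{Var}(Y),\operatorname{Var}(A)>0$; let $\rho_{YA}$ be the correlation coefficient of $Y$ and $A$ and $\ell(u,v)=(u-v)^2$. Let $Z=g(X)$ be any (possibly randomized) representation. If $\operatorname{Var}\mathbb{E}[A\mid Z]=0$, then $$\inf_h\mathbb{E}[\ell(Y,h(Z))]\ge \operatorname{Var}(Y)\cdot\rho_{YA}^2.$$ If $\operatorname{Var}\mathbb{E}[Y\mid Z]=\operatorname{Var}(Y)$, then $$\inf_h\mathbb{E}[\ell(A,h(Z))]\le \operatorname{Var}(A)(1-\rho_{YA}^2).$$ The infima are over measurable functions $h$.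
   Context: A (possibly randomized) representation is $Z=g(X,S)$ for a measurable $g$ and auxiliary randomness $S$ independent of $(X,A,Y)$. $\phi(X)$ is assumed to have finite second moment in $\mathbb{H}$. *)

(* Defs.v *)
From HB Require Import structures.
From mathcomp Require Import all_boot all_order all_algebra.
From mathcomp Require Import all_classical all_reals all_analysis.
Set Implicit Arguments. Unset Strict Implicit. Unset Printing Implicit Defensive.
Import Order.TTheory GRing.Theory Num.Theory.
Local Open Scope classical_set_scope.
Local Open Scope ring_scope.

(* A reproducing kernel Hilbert space of real functions on T:
   H is a real vector space, [ip] an inner product on H which makes H
   complete, [ev f x] is the value at x of the function f (ev is linear and
   injective, so H is a space of functions on T), and [phi] is the feature
   map, with the reproducing property <f, phi x> = f x. *)
Definition is_RKHS (R : realType) (T : Type) (H : lmodType R)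
  (ip : H -> H -> R) (ev : H -> T -> R) (phi : T -> H) : Prop :=
  (forall (c : R) (f g h : H), ip (c *: f + g) h = c * ip f h + ip g h) /\
      (forall f g : H, ip f g = ip g f) /\
      (forall f : H, 0 <= ip f f) /\
      (forall f : H, ip f f = 0 -> f = 0) /\
      (forall u : nat -> H,
        (forall e : R, 0 < e -> exists N : nat, forall m n : nat,
           (N <= m)%N -> (N <= n)%N -> ip (u m - u n) (u m - u n) < e) ->
        exists l : H, forall e : R, 0 < e -> exists N : nat, forall n : nat,
           (N <= n)%N -> ip (u n - l) (u n - l) < e) /\
      (forall (c : R) (f g : H) (x : T), ev (c *: f + g) x = c * ev f x + ev g x) /\
      (forall f : H, (forall x, ev f x = 0) -> f = 0) /\
      (forall (f : H) (x : T), ip f (phi x) = ev f x).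

(* W is a version of the conditional expectation E[V | Z]:
   W is sigma(Z)-measurable (i.e. W = h o Z with h measurable), integrable,
   and has the same integral as V on every event {Z \in B}. *)
Definition is_cond_exp {d} {Omega : measurableType d} {R : realType}
  (P : probability Omega R) {dZ} {TZ : measurableType dZ}
  (V : Omega -> R) (Z : Omega -> TZ) (W : Omega -> R) : Prop :=
  exists h : TZ -> R,
    [/\ measurable_fun setT h,
        W = h \o Z,
        P.-integrable setT (EFin \o W) &
        forall B : set TZ, measurable B ->
          (\int[P]_(w in Z @^-1` B) (V w)%:E = \int[P]_(w in Z @^-1` B) (W w)%:E)%E].

Definition correlation {d} {Omega : measurableType d} {R : realType}
  (P : probability Omega R) (U V : Omega -> R) : R :=
  fine (covariance P U V) / Num.sqrt (fine (variance P U) * fine (variance P V)).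

Definition best_sq_risk {d} {Omega : measurableType d} {R : realType}
  (P : probability Omega R) {dZ} {TZ : measurableType dZ}
  (V : Omega -> R) (Z : Omega -> TZ) : \bar R :=
  ereal_inf [set (\int[P]_w ((V w - h (Z w)) ^+ 2)%:E)%E
            | h in [set h : TZ -> R | measurable_fun setT h]].

(* Main.v *)
Require Import Defs.
From HB Require Import structures.
From mathcomp Require Import all_boot all_order all_algebra.
From mathcomp Require Import all_classical all_reals all_analysis.
From mathcomp Require Import ring lra measurable_realfun.
Import Order.TTheory GRing.Theory Num.Theory.
Import numFieldNormedType.Exports.
Local Open Scope classical_set_scope.
Local Open Scope ring_scope.
Set Implicit Arguments. Unset Strict Implicit.

Lemma ipCS (R : realType) (H : lmodType R) (ip : H -> H -> R) :
  (forall (c : R) (f g h : H), ip (c *: f + g) h = c * ip f h + ip g h) ->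
  (forall f g : H, ip f g = ip g f) ->
  (forall f : H, 0 <= ip f f) ->
  forall f g, 0 < ip g g -> ip f g ^+ 2 <= ip f f * ip g g.
Proof.
move=> lin sym pos f g gpos.
set t := ip f g / ip g g.
have := pos ((- t) *: g + f).
rewrite lin (sym g) (sym f) !lin (sym g f).
have -> : t = ip f g / ip g g by [].
set G := ip g g; set F := ip f g; set FF := ip f f => h.
have hG : G != 0 by rewrite gt_eqF.
have e : - (F / G) * (- (F / G) * G + F) + (- (F / G) * F + FF) = FF - F^+2 / G.
  by field.
rewrite e subr_ge0 ler_pdivrMr // in h.
Qed.

Lemma Lfun2P d (T : measurableType d) (R : realType) (P : probability T R) (f : T -> R) :
  measurable_fun setT f -> (\int[P]_x (f x ^+ 2)%:E < +oo)%E -> f \in Lfun P 2%:E.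
Proof.
move=> mf fi; rewrite inE; apply/andP; split; rewrite inE //=.
rewrite /finite_norm unlock /Lnorm poweR_lty//.
under eq_integral => x _ do rewrite /= -[(2:R)]/(2%:R) powR_mulrn// real_normK ?num_real//.
by [].
Qed.

Lemma Lfun2_dom d (T : measurableType d) (R : realType) (P : probability T R)
  (U Q : T -> R) (c : R) :
  measurable_fun setT U -> measurable_fun setT Q -> (forall w, 0 <= Q w) ->
  (\int[P]_w (Q w)%:E < +oo)%E -> 0 <= c ->
  (forall w, U w ^+ 2 <= c * Q w) -> U \in Lfun P 2%:E.
Proof.
move=> mU mQ Q0 Qi c0 UQ; apply: Lfun2P => //.
apply: (@le_lt_trans _ _ (\int[P]_w (c%:E * (Q w)%:E))%E).
  apply: ge0_le_integral => //.
  - by move=> w ?; rewrite lee_fin sqr_ge0.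
  - by apply/measurable_EFinP; exact: measurable_funX.
  - by apply: emeasurable_funM => //; apply: measurableT_comp.
  - by move=> w ?; rewrite -EFinM lee_fin.
rewrite ge0_integralZl//.
- by rewrite lte_mul_pinfty.
- by apply: measurableT_comp.
- by move=> w ?; rewrite lee_fin.
Qed.

Lemma int_indic d (T : measurableType d) (R : realType) (P : probability T R)
  (V : T -> R) (D : set T) :
  (\int[P]_(x in D) (V x)%:E = \int[P]_x (V x * \1_D x)%:E)%E.
Proof.
rewrite integral_mkcond; apply: eq_integral => x _.
rewrite /patch indicE; case: (x \in D); by rewrite ?mulr1 ?mulr0.
Qed.

Lemma integrable_indicM d (T : measurableType d) (R : realType) (P : probability T R)
  (V : T -> R) (D : set T) : measurable D ->
  P.-integrable setT (EFin \o V) -> P.-integrable setT (fun x => (V x * \1_D x)%:E).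
Proof.
move=> mD iV.
have hb : [bounded (\1_D : T -> R) x | x in setT].
  exists 1; split; first exact: num_real.
  move=> r r1 x _ /=; rewrite indicE; case: (x \in D) => /=; rewrite ?normr1 ?normr0 ltW//.
  by rewrite (lt_trans _ r1).
have := integrableMl measurableT iV (measurable_indic mD) hb.
by apply: eq_integrable => // x _ /=; rewrite EFinM.
Qed.

Import HBSimple.
Lemma orth_sfun d (T : measurableType d) (R : realType) (P : probability T R)
  dZ (TZ : measurableType dZ) (V : T -> R) (Z : T -> TZ) (phi : {sfun TZ >-> R}) :
  measurable_fun setT Z -> P.-integrable setT (EFin \o V) ->
  (forall B, measurable B -> \int[P]_w (V w * \1_(Z @^-1` B) w)%:E = 0)%E ->
  (\int[P]_w (V w * phi (Z w))%:E = 0)%E.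
Proof.
move=> mZ iV hB.
have key (c : R) (B : set TZ) : measurable B ->
    (\int[P]_w (V w * (c * \1_B (Z w)))%:E = 0)%E.
  move=> mB.
  have mZB : measurable (Z @^-1` B) by rewrite -[Z @^-1` _]setTI; exact: mZ.
  have -> : (fun w => (V w * (c * \1_B (Z w)))%:E) =
            (fun w => c%:E * (V w * \1_(Z @^-1` B) w)%:E)%E.
    by apply/funext => w; rewrite -EFinM mulrCA.
  rewrite integralZl// ?hB ?mule0//.
  exact: integrable_indicM.
have keyint (c : R) (B : set TZ) : measurable B ->
    P.-integrable setT (fun w => (V w * (c * \1_B (Z w)))%:E).
  move=> mB.
  have mZB : measurable (Z @^-1` B) by rewrite -[Z @^-1` _]setTI; exact: mZ.
  have -> : (fun w => (V w * (c * \1_B (Z w)))%:E) =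
            (fun w => c%:E * (V w * \1_(Z @^-1` B) w)%:E)%E.
    by apply/funext => w; rewrite -EFinM mulrCA.
  apply: integrableZl => //; exact: integrable_indicM.
have mB (c : R) : measurable (phi @^-1` [set c]) by exact: measurable_sfunP.
under eq_integral => w _ do rewrite (fimfunEord phi (Z w)) mulr_sumr -sumEFin.
rewrite integral_sum//; last by move=> i; apply: keyint.
by rewrite big1// => i _; apply: key.
Qed.

Import HBNNSimple.
Lemma orth d (T : measurableType d) (R : realType) (P : probability T R)
  dZ (TZ : measurableType dZ) (V : T -> R) (Z : T -> TZ) (k : TZ -> R) :
  measurable_fun setT Z -> measurable_fun setT k ->
  P.-integrable setT (EFin \o V) ->
  P.-integrable setT (fun w => (V w * k (Z w))%:E) ->
  (forall B, measurable B -> \int[P]_w (V w * \1_(Z @^-1` B) w)%:E = 0)%E ->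
  (\int[P]_w (V w * k (Z w))%:E = 0)%E.
Proof.
move=> mZ mk iV iVk hB.
pose kp := fun z => (Num.max (k z) 0)%:E.
pose kn := fun z => (Num.max (- k z) 0)%:E.
have mkp : measurable_fun setT kp.
  by apply: measurableT_comp => //; apply: measurable_maxr.
have mkn : measurable_fun setT kn.
  by apply: measurableT_comp => //; apply: measurable_maxr => //; exact: measurableT_comp.
have kp0 : forall z, setT z -> (0 <= kp z)%E by move=> z _; rewrite lee_fin le_max lexx orbT.
have kn0 : forall z, setT z -> (0 <= kn z)%E by move=> z _; rewrite lee_fin le_max lexx orbT.
pose fp := nnsfun_approx measurableT mkp.
pose fn := nnsfun_approx measurableT mkn.
pose psi n : {sfun TZ >-> R} := fp n \+ cst (-1) \* fn n.
have psiE n z : psi n z = fp n z - fn n z by rewrite /psi /= mulN1r.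
have fpcvg z : (fun n => fp n z : R) @ \oo --> (Num.max (k z) 0 : R).
  have := cvg_nnsfun_approx measurableT mkp kp0 (I : setT z).
  by move/fine_cvg.
have fncvg z : (fun n => fn n z : R) @ \oo --> (Num.max (- k z) 0 : R).
  have := cvg_nnsfun_approx measurableT mkn kn0 (I : setT z).
  by move/fine_cvg.
have fple n z : fp n z <= Num.max (k z) 0.
  have := le_approx n kp0 (I : setT z).
  by rewrite -(nnsfun_approxE measurableT mkp) lee_fin.
have fnle n z : fn n z <= Num.max (- k z) 0.
  have := le_approx n kn0 (I : setT z).
  by rewrite -(nnsfun_approxE measurableT mkn) lee_fin.
have psibound n z : `|psi n z| <= `|k z|.
  rewrite psiE; have := (fun_ge0 z : 0 <= fp n z); have := (fun_ge0 z : 0 <= fn n z).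
  have := fple n z; have := fnle n z.
  case: (lerP 0 (k z)) => hk.
    rewrite (max_idPr _); last by rewrite oppr_le0.
    rewrite (ger0_norm hk) => h1 h2 h3 h4.
    have -> : fn n z = 0 by apply/eqP; rewrite eq_le h1 h3.
    by rewrite subr0 ger0_norm.
  rewrite (max_idPl _); last by rewrite oppr_ge0 ltW.
  rewrite (ltr0_norm hk) => h1 h2 h3 h4.
  have -> : fp n z = 0 by apply/eqP; rewrite eq_le h2 h4.
  by rewrite sub0r normrN ger0_norm// .
have psicvg z : (fun n => psi n z : R) @ \oo --> (k z : R).
  have -> : k z = Num.max (k z) 0 - Num.max (- k z) 0.
    by case: (lerP 0 (k z)) => hk;
      [rewrite (max_idPr _) ?subr0// oppr_le0
      |rewrite (max_idPl _) ?sub0r ?opprK// oppr_ge0 ltW].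
  under eq_fun do rewrite psiE.
  exact: cvgB.
have h0 n : (\int[P]_w (V w * psi n (Z w))%:E = 0)%E.
  exact: orth_sfun.
have mf_ : forall n, measurable_fun setT (fun w => (V w * psi n (Z w))%:E).
  move=> n; apply: measurableT_comp => //; apply: measurable_funM.
    by apply/measurable_EFinP; exact: measurable_int iV.
  by apply: measurableT_comp => //.
have mf : measurable_fun setT (fun w => (V w * k (Z w))%:E).
  apply: measurableT_comp => //; apply: measurable_funM.
    by apply/measurable_EFinP; exact: measurable_int iV.
  exact: measurableT_comp.
have ff : {ae P, forall w, setT w -> (fun n => (V w * psi n (Z w))%:E) @ \oo --> (V w * k (Z w))%:E}%E.
  apply: aeW => w _; apply: cvg_EFin; first exact: nearW.
  exact: cvgM (cvg_cst (V w)) (psicvg (Z w)).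
have ig : P.-integrable setT (fun w => `|(V w * k (Z w))%:E|)%E.
  exact: integrable_abse iVk.
have fg : {ae P, forall w n, setT w -> `|(V w * psi n (Z w))%:E| <= `|(V w * k (Z w))%:E|}%E.
  apply: aeW => w n _; rewrite lee_fin !normrM ler_wpM2l//.
have := @dominated_convergence _ _ _ P setT measurableT
  (fun n w => (V w * psi n (Z w))%:E) (fun w => (V w * k (Z w))%:E)
  (fun w => `|(V w * k (Z w))%:E|)%E mf_ mf ff ig fg.
move=> [_ _ cvgint].
have hc : (fun n => \int[P]_w (V w * psi n (Z w))%:E)%E = cst 0%E.
  by apply/funext => n; exact: h0.
rewrite /= hc in cvgint.
apply/esym; apply: (cvg_unique (@ereal_hausdorff R) _ cvgint).
exact: cvg_cst.
Qed.

Lemma L21 d (T : measurableType d) (R : realType) (P : probability T R) (f : T -> R) :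
  f \in Lfun P 2%:E -> f \in Lfun P 1.
Proof. by move=> f2; apply: (Lfun_subset12 _ f2); exact: fin_num_measure. Qed.

Lemma E_fin d (T : measurableType d) (R : realType) (P : probability T R) (f : T -> R) :
  f \in Lfun P 1 -> 'E_P[f]%E = (fine 'E_P[f])%:E.
Proof. by move=> f1; rewrite fineK// expectation_fin_num. Qed.

Lemma cov_fin d (T : measurableType d) (R : realType) (P : probability T R) (f g : T -> R) :
  f \in Lfun P 2%:E -> g \in Lfun P 2%:E ->
  covariance P f g = (fine (covariance P f g))%:E.
Proof.
move=> f2 g2; rewrite fineK//; apply: covariance_fin_num.
- exact: L21.
- exact: L21.
- exact: (Lfun2_mul_Lfun1 f2 g2).
Qed.

Lemma var_fin d (T : measurableType d) (R : realType) (P : probability T R) (f : T -> R) :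
  f \in Lfun P 2%:E -> variance P f = (fine (variance P f))%:E.
Proof. by move=> f2; rewrite fineK// variance_fin_num. Qed.

Lemma var_ge0 d (T : measurableType d) (R : realType) (P : probability T R) (f : T -> R) :
  0 <= fine (variance P f).
Proof. by apply: fine_ge0; exact: variance_ge0. Qed.

Lemma cov_sq d (T : measurableType d) (R : realType) (P : probability T R) (f g : T -> R) :
  f \in Lfun P 2%:E -> g \in Lfun P 2%:E ->
  fine (covariance P f g) ^+ 2 <= fine (variance P f) * fine (variance P g).
Proof.
move=> f2 g2.
have h1 := covariance_le f2 g2.
have g2' : (\- g)%R \in Lfun P 2%:E by rewrite rpredN.
have h2 := covariance_le f2 g2'.
rewrite covarianceNr in h2; [|exact: L21|exact: L21|exact: (Lfun2_mul_Lfun1 f2 g2)].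
rewrite varianceN // in h2.
rewrite (cov_fin f2 g2) (var_fin f2) (var_fin g2) /= in h1 h2.
rewrite -EFinM !lee_fin in h1 h2.
have vf0 := var_ge0 P f; have vg0 := var_ge0 P g.
set c := fine (covariance P f g) in h1 h2 *.
set vf := fine (variance P f) in vf0 h1 h2 *.
set vg := fine (variance P g) in vg0 h1 h2 *.
have -> : vf * vg = (Num.sqrt vf * Num.sqrt vg) ^+ 2 by rewrite exprMn !sqr_sqrtr.
have s0 : 0 <= Num.sqrt vf * Num.sqrt vg by rewrite mulr_ge0 ?sqrtr_ge0.
nra.
Qed.

Lemma centered d (T : measurableType d) (R : realType) (P : probability T R) (f g : T -> R) :
  f \in Lfun P 2%:E -> g \in Lfun P 2%:E ->
  expectation P (fun w => (f w - fine (expectation P f)) * g w) = covariance P f g.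
Proof.
move=> f2 g2.
have -> : (fun w => (f w - fine (expectation P f)) * g w) = (f \* g \- (fine (expectation P f)) \o* g)%R.
  by apply/funext => w /=; rewrite mulrBl [g w * _]mulrC.
have fg1 := Lfun2_mul_Lfun1 f2 g2.
have f1 := L21 f2; have g1 := L21 g2.
rewrite expectationB //; last by rewrite Lfun_scale.
rewrite expectationZl // covarianceE //.
by rewrite -E_fin.
Qed.

Lemma L2_of_var d (T : measurableType d) (R : realType) (P : probability T R) (W : T -> R) :
  measurable_fun setT W -> variance P W \is a fin_num -> W \in Lfun P 2%:E.
Proof.
move=> mW vfin.
have e : variance P W =
    (\int[P]_w ((W w - fine (expectation P W)) ^+ 2)%:E)%E.
  by rewrite /variance !unlock; apply: eq_integral => w _; rewrite /= expr2.
have Wc2 : (W \- cst (fine (expectation P W)))%R \in Lfun P 2%:E.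
  apply: Lfun2P; first by apply: measurable_funB.
  by rewrite -e ltey_eq vfin.
have -> : W = ((W \- cst (fine (expectation P W))) \+ cst (fine (expectation P W)))%R.
  by apply/funext => w /=; rewrite subrK.
apply: rpredD => //; last by move=> ?; exact: Lfun_cst.
by rewrite lee1n.
Qed.

Lemma indic_L2 d (T : measurableType d) (R : realType) (P : probability T R) (D : set T) :
  measurable D -> (\1_D : T -> R) \in Lfun P 2%:E.
Proof.
move=> mD; apply: (@Lfun2_dom _ _ _ _ _ (cst 1) 1).
- exact: measurable_indic.
- exact: measurable_cst.
- by move=> w; rewrite ler01.
- rewrite -[X in (X < _)%E]/(\int[P]_x (cst 1%:E) x)%E integral_cst //=.
  by rewrite probability_setT mule1 ltry.
- by rewrite ler01.
- move=> w; rewrite indicE mul1r /=; case: (w \in D); rewrite ?expr1n ?expr0n //.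
Qed.

Lemma varE_int d (T : measurableType d) (R : realType) (P : probability T R) (W : T -> R) :
  variance P W = (\int[P]_w ((W w - fine (expectation P W)) ^+ 2)%:E)%E.
Proof. by rewrite /variance !unlock; apply: eq_integral => w _; rewrite /= expr2. Qed.

Lemma Eint d (T : measurableType d) (R : realType) (P : probability T R) (f : T -> R) :
  expectation P f = (\int[P]_w (f w)%:E)%E.
Proof. by rewrite unlock. Qed.

Unset Implicit Arguments.

Theorem corollary3
  (R : realType) (d : measure_display) (Omega : measurableType d)
  (P : probability Omega R)
  (dX : measure_display) (TX : measurableType dX)
  (dS : measure_display) (TS : measurableType dS)
  (dZ : measure_display) (TZ : measurableType dZ)
  (H : lmodType R) (ip : H -> H -> R) (ev : H -> TX -> R) (phi : TX -> H)
  (X : Omega -> TX) (S : Omega -> TS) (g : TX * TS -> TZ)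
  (y a : H) :
  is_RKHS ip ev phi ->
  measurable_fun setT X ->
  (forall h : H, measurable_fun setT (fun w => ip (phi (X w)) h)) ->
  measurable_fun setT (fun w => ip (phi (X w)) (phi (X w))) ->
  (\int[P]_w (ip (phi (X w)) (phi (X w)))%:E < +oo)%E ->
  y != 0 -> a != 0 ->
  let Y := fun w => ip (phi (X w)) y in
  let A := fun w => ip (phi (X w)) a in
  (0 < variance P Y)%E -> (0 < variance P A)%E ->
  measurable_fun setT S ->
  (forall (B : set TX) (C : set TS), measurable B -> measurable C ->
     P (X @^-1` B `&` S @^-1` C) = (P (X @^-1` B) * P (S @^-1` C))%E) ->
  measurable_fun setT g ->
  let Z := fun w => g (X w, S w) in
  ((exists W, is_cond_exp P A Z W /\ variance P W = 0%E) ->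
     ((fine (variance P Y) * correlation P Y A ^+ 2)%:E <= best_sq_risk P Y Z)%E)
  /\
  ((exists W, is_cond_exp P Y Z W /\ variance P W = variance P Y) ->
     (best_sq_risk P A Z <= (fine (variance P A) * (1 - correlation P Y A ^+ 2))%:E)%E).
Proof.
move=> RK mX mipX mipXX intXX y0 a0 Y A vY0 vA0 mS _ mg Z.
case: RK => lin [sym [pos [defn [_ [_ [_ _]]]]]].
have mZ : measurable_fun setT Z.
  exact: measurableT_comp mg (measurable_fun_pair mX mS).
have ipgt0 (v : H) : v != 0 -> 0 < ip v v.
  move=> v0; rewrite lt_neqAle pos andbT eq_sym; apply/negP => /eqP /defn.
  by move/eqP; rewrite (negbTE v0).
have L2ip (v : H) : v != 0 -> (fun w => ip (phi (X w)) v) \in Lfun P 2%:E.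
  move=> v0; apply: (@Lfun2_dom _ _ _ _ _ (fun w => ip (phi (X w)) (phi (X w))) (ip v v)).
  - exact: mipX.
  - exact: mipXX.
  - by move=> w; exact: pos.
  - exact: intXX.
  - exact: ltW (ipgt0 v v0).
  - by move=> w; rewrite mulrC; apply: ipCS => //; exact: ipgt0.
have Y2 : Y \in Lfun P 2%:E by exact: L2ip.
have A2 : A \in Lfun P 2%:E by exact: L2ip.
have mY : measurable_fun setT Y by exact: mipX.
have mA : measurable_fun setT A by exact: mipX.
set vY := fine (variance P Y).
set vA := fine (variance P A).
set cYA := fine (covariance P Y A).
have vYgt0 : 0 < vY by rewrite -lte_fin /vY -var_fin.
have vAgt0 : 0 < vA by rewrite -lte_fin /vA -var_fin.
have rho2 : correlation P Y A ^+ 2 = cYA ^+ 2 / (vY * vA).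
  by rewrite /correlation -/vY -/vA -/cYA expr_div_n sqr_sqrtr // mulr_ge0 // ltW.
rewrite rho2.
split.
  move=> [W [[h0 [mh0 eW iW hW]] vW]].
  have mW : measurable_fun setT W by rewrite eW; exact: measurableT_comp.
  have W2 : W \in Lfun P 2%:E by apply: L2_of_var => //; rewrite vW.
  have EWA : expectation P W = expectation P A.
    have := hW setT measurableT; rewrite preimage_setT => h.
    by rewrite !Eint -h.
  set cA := fine (expectation P A).
  have orthA B : measurable B ->
      (\int[P]_w ((A w - cA) * \1_(Z @^-1` B) w)%:E = 0)%E.
    move=> mB.
    have mZB : measurable (Z @^-1` B) by rewrite -[Z @^-1` B]setTI; exact: mZ.
    have I2 := @indic_L2 _ _ _ P _ mZB.
    have cWI : covariance P W (\1_(Z @^-1` B)) = 0%E.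
      have h := cov_sq W2 I2.
      rewrite vW (_ : fine 0%E = 0 :> R) // mul0r in h.
      rewrite (cov_fin W2 I2); congr EFin; apply/eqP.
      by rewrite -sqrf_eq0 eq_le h sqr_ge0.
    have eAI : expectation P (A \* \1_(Z @^-1` B))%R =
               expectation P (W \* \1_(Z @^-1` B))%R.
      have := hW B mB; rewrite (@int_indic _ _ _ P A) (@int_indic _ _ _ P W) => h.
      by rewrite !Eint.
    have cAI : covariance P A (\1_(Z @^-1` B)) = 0%E.
      rewrite covarianceE; [|exact: L21|exact: L21|exact: Lfun2_mul_Lfun1].
      rewrite eAI -EWA -cWI covarianceE //; [exact: L21|exact: L21|exact: Lfun2_mul_Lfun1].
    by rewrite -cAI -(centered A2 I2) Eint.
  apply: le_ereal_inf_tmp => _ [h mh <-].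
  have [ifin|] := ltP (\int[P]_w ((Y w - h (Z w)) ^+ 2)%:E)%E +oo%E; last first.
    by rewrite leye_eq => /eqP ->; rewrite leey.
  pose U := fun w => Y w - h (Z w).
  have mhZ : measurable_fun setT (h \o Z) by exact: measurableT_comp mh mZ.
  have U2 : U \in Lfun P 2%:E by apply: Lfun2P => //; apply: measurable_funB.
  have G2 : (h \o Z) \in Lfun P 2%:E.
    have -> : h \o Z = (Y \- U)%R by apply/funext => w /=; rewrite /U opprB addrC subrK.
    by apply: rpredB => //; rewrite lee1n.
  have V2 : (A \- cst cA)%R \in Lfun P 2%:E.
    apply: rpredB => //; last by move=> ?; exact: Lfun_cst.
    by rewrite lee1n.
  have cAG : covariance P A (h \o Z) = 0%E.
    rewrite -(centered A2 G2) Eint /=.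
    apply: (@orth _ _ _ P _ _ (fun w => A w - cA) Z h mZ mh).
    - by apply/Lfun1_integrable; exact: L21 V2.
    - by apply/Lfun1_integrable; exact: Lfun2_mul_Lfun1 V2 G2.
    - exact: orthA.
  have cUA : fine (covariance P U A) = cYA.
    have -> : U = (Y \- (h \o Z))%R by [].
    by rewrite covarianceBl // (covarianceC _ (h \o Z) A) cAG sube0.
  have hcs := cov_sq U2 A2.
  rewrite cUA -/vA in hcs.
  have U2sq : (U ^+ 2)%R \in Lfun P 1 by exact: (Lfun2_mul_Lfun1 U2 U2).
  have vE := varianceE U2.
  rewrite (var_fin U2) (E_fin U2sq) (E_fin (L21 U2)) -EFin_expe -EFinB in vE.
  have vE2 := EFin_inj vE.
  have -> : (\int[P]_w ((Y w - h (Z w)) ^+ 2)%:E)%E = expectation P (U ^+ 2)%R.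
    by rewrite Eint.
  rewrite (E_fin U2sq) lee_fin.
  have -> : vY * (cYA ^+ 2 / (vY * vA)) = cYA ^+ 2 / vA.
    by field; rewrite !gt_eqF.
  rewrite ler_pdivrMr //; apply: (le_trans hcs); rewrite ler_pM2r // vE2.
  by rewrite lerBlDr lerDl sqr_ge0.
move=> [W [[h0 [mh0 eW iW hW]] vW]].
subst W.
have mW : measurable_fun setT (h0 \o Z) by exact: measurableT_comp.
have W2 : (h0 \o Z) \in Lfun P 2%:E.
  by apply: L2_of_var => //; rewrite vW variance_fin_num.
have EWY : expectation P (h0 \o Z) = expectation P Y.
  have := hW setT measurableT; rewrite preimage_setT => h.
  by rewrite !Eint -h.
pose V := (Y \- (h0 \o Z))%R.
have V2 : V \in Lfun P 2%:E by apply: rpredB => //; rewrite lee1n.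
have orthV B : measurable B ->
    (\int[P]_w (V w * \1_(Z @^-1` B) w)%:E = 0)%E.
  move=> mB.
  have mZB : measurable (Z @^-1` B) by rewrite -[Z @^-1` B]setTI; exact: mZ.
  have I2 := @indic_L2 _ _ _ P _ mZB.
  have := hW B mB; rewrite (@int_indic _ _ _ P Y) (@int_indic _ _ _ P (h0 \o Z)) => h.
  have -> : (\int[P]_w (V w * \1_(Z @^-1` B) w)%:E)%E =
      expectation P ((Y \* \1_(Z @^-1` B)) \- ((h0 \o Z) \* \1_(Z @^-1` B)))%R.
    by rewrite Eint; apply: eq_integral => w _; rewrite /= mulrBl.
  have YI := Lfun2_mul_Lfun1 Y2 I2.
  have WI := Lfun2_mul_Lfun1 W2 I2.
  rewrite expectationB //.
  have -> : expectation P (Y \* \1_(Z @^-1` B))%R =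
            expectation P ((h0 \o Z) \* \1_(Z @^-1` B))%R by rewrite !Eint.
  by rewrite subee // expectation_fin_num.
have V1 := L21 V2.
have W1 := L21 W2.
have EV0 : expectation P V = 0%E.
  have h0V : (\int[P]_w (V w * \1_(@setT Omega) w)%:E = 0)%E :=
    orthV setT measurableT.
  rewrite Eint -[RHS]h0V.
  by apply: eq_integral => w _; rewrite indicT /= mulr1.
have VW0 : expectation P (V \* (h0 \o Z))%R = 0%E.
  rewrite Eint; apply: (@orth _ _ _ P _ _ V Z h0 mZ mh0).
  - by apply/Lfun1_integrable.
  - by apply/Lfun1_integrable; exact: Lfun2_mul_Lfun1 V2 W2.
  - exact: orthV.
have cVW : covariance P V (h0 \o Z) = 0%E.
  rewrite covarianceE //; last exact: Lfun2_mul_Lfun1 V2 W2.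
  by rewrite VW0 EV0 mul0e sube0.
have eY : Y = (V \+ (h0 \o Z))%R by apply/funext => w /=; rewrite subrK.
have vV0 : fine (variance P V) = 0.
  have := varianceD V2 W2; rewrite -eY cVW mule0 adde0 vW.
  rewrite (var_fin Y2) (var_fin V2) -EFinD => hh; have h := EFin_inj hh.
  by lra.
pose beta := cYA / vY.
pose c0 := fine (expectation P A) - beta * fine (expectation P Y).
pose U' := (A \- beta \o* Y)%R.
pose U2 := (A \- beta \o* (h0 \o Z))%R.
have r12 : (1 <= 2 :> R) by rewrite ler1n.
have bY2 : (beta \o* Y)%R \in Lfun P 2%:E by exact: Lfun_scale.
have bV2 : (beta \o* V)%R \in Lfun P 2%:E by exact: Lfun_scale.
have bW2 : (beta \o* (h0 \o Z))%R \in Lfun P 2%:E by exact: Lfun_scale.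
have U'2 : U' \in Lfun P 2%:E by apply: rpredB => //; rewrite lee1n.
have U22 : U2 \in Lfun P 2%:E by apply: rpredB => //; rewrite lee1n.
have A1 := L21 A2.
have Y1 := L21 Y2.
have eU2 : U2 = (U' \+ beta \o* V)%R.
  by apply/funext => w; rewrite /U2 /U' /V /=; ring.
have cUV : covariance P U' V = 0%E.
  have hc := cov_sq U'2 V2.
  rewrite vV0 mulr0 in hc.
  rewrite (cov_fin U'2 V2); congr EFin; apply/eqP.
  by rewrite -sqrf_eq0 eq_le hc sqr_ge0.
have vU2 : variance P U2 = variance P U'.
  have U'1 := L21 U'2.
  have U'V1 := Lfun2_mul_Lfun1 U'2 V2.
  rewrite eU2 varianceD // varianceZ // covarianceZr //.
  by rewrite cUV (var_fin V2) vV0 !mule0 !adde0.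
have vU' : variance P U' = (vA + beta ^+ 2 * vY - 2 * (beta * cYA))%:E.
  have AY1 := Lfun2_mul_Lfun1 A2 Y2.
  rewrite varianceB // varianceZ // covarianceZr //.
  rewrite (covarianceC _ A Y) (var_fin A2) (var_fin Y2) (cov_fin Y2 A2).
  by rewrite -!EFinM -EFinD.
have eEU2 : fine (expectation P U2) = c0.
  have bW1 := L21 bW2.
  rewrite expectationB // expectationZl //.
  by rewrite EWY (E_fin A1) (E_fin Y1) -EFinM -EFinB.
have hinf : (best_sq_risk P A Z <= \int[P]_w ((A w - (c0 + beta * h0 (Z w))) ^+ 2)%:E)%E.
  apply: ereal_inf_lbound; exists (fun z => c0 + beta * h0 z) => //.
  by apply: measurable_funD => //; exact: measurable_funM.
apply: (le_trans hinf).
have -> : (\int[P]_w ((A w - (c0 + beta * h0 (Z w))) ^+ 2)%:E)%E = variance P U2.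
  rewrite varE_int eEU2; apply: eq_integral => w _.
  by rewrite /U2 /=; congr EFin; ring.
rewrite vU2 vU' lee_fin le_eqVlt; apply/orP; left; apply/eqP.
rewrite /beta; field.
by rewrite !gt_eqF.
Qed.
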